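(* Let $n\in\mathbb{N}_0$ and $v\in\mathbb{P}_n([0,1])$. For each $\mathrm{Z}\in\{\mathrm{I},\mathrm{II},\mathrm{III}\}$ there exists a unique $u^{\mathrm{Z}}\in\mathbb{P}^\perp_{n,n-1}(\widehat T)$ with $v=\gamma^{\mathrm{Z}}u^{\mathrm{Z}}$. Consequently the linear extension operator $\mathcal{E}^{\mathrm{Z}}:\mathbb{P}_n([0,1])\to\mathbb{P}^\perp_{n,n-1}(\widehat T)$, $\mathcal{E}^{\mathrm{Z}}v:=u^{\mathrm{Z}}$, is well defined.
   Context: $\widehat T$ is the triangle with vertices $(0,0),(1,0),(0,1)$. $\mathbb{P}^\perp_{0,-1}(\widehat T)=\mathbb{P}_0(\widehat T)$, and for $n\ge1$, $\mathbb{P}^\perp_{n,n-1}(\widehat T):=\{u\in\mathbb{P}_n(\widehat T):\int_{\widehat T}uv=0\ \forall v\in\mathbb{P}_{n-1}(\widehat T)\}$, where $\mathbb{P}_m$ denotes polynomials of total degree $\le m$. Restriction operators: $\gamma^{\mathrm{I}}u:=u(\cdot,0)$, $\gamma^{\mathrm{II}}u:=u(0,\cdot)$, $\gamma^{\mathrm{III}}u:=u(1-\cdot,\cdot)$ (functions on $[0,1]$). *)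

(* Defs.v *)
From Stdlib Require Import Reals Lra Lia Arith.
From Coquelicot Require Import Coquelicot.
Open Scope R_scope.

Definition is_poly1 (n : nat) (v : R -> R) : Prop :=
  exists c : nat -> R, forall t, v t = sum_n (fun k => c k * t ^ k) n.

Definition is_poly2 (n : nat) (u : R -> R -> R) : Prop :=
  exists c : nat -> nat -> R, forall x y,
    u x y = sum_n (fun i => sum_n (fun j =>
              if (i + j <=? n)%nat then c i j * x ^ i * y ^ j else 0) n) n.

Definition int_T (f : R -> R -> R) : R :=
  RInt (fun x => RInt (fun y => f x y) 0 (1 - x)) 0 1.

Definition Pperp (n : nat) (u : R -> R -> R) : Prop :=
  is_poly2 n u /\
  match n with
  | O => True
  | S m => forall w, is_poly2 m w -> int_T (fun x y => u x y * w x y) = 0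
  end.

Inductive edge := EI | EII | EIII.

Definition gamma (Z : edge) (u : R -> R -> R) (t : R) : R :=
  match Z with
  | EI => u t 0
  | EII => u 0 t
  | EIII => u (1 - t) t
  end.

(* Main.v *)
From HB Require Import structures.
Require Import Defs.
From Stdlib Require Import Reals Lra FunctionalExtensionality ClassicalEpsilon.
From Coquelicot Require Import Coquelicot.
Set Warnings "-notation-overridden -ambiguous-paths".
From mathcomp Require Import all_boot all_algebra.
From mathcomp Require Import Rstruct zify.
Import GRing.Theory.
Open Scope R_scope.
Set Implicit Arguments.
Unset Strict Implicit.

Definition mono (c x y : R) (i j : nat) : R := c * x ^ i * y ^ j.
Definition S (c : nat -> nat -> R) (K : nat) (x y : R) : R :=
  (\sum_(0 <= i < K) \sum_(0 <= j < K) mono (c i j) x y i j)%R.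

Definition P2 (n : nat) (f : R -> R -> R) : Prop :=
  exists c : nat -> nat -> R, (forall i j, (n < i + j)%N -> c i j = 0) /\
    forall x y, f x y = S c n.+1 x y.

Ltac rring := rewrite /mono /= -?RmultE -?RplusE -?RoppE -?RminusE -?R0E -?R1E; ring.

Lemma mono0 x y i j : mono 0 x y i j = 0.
Proof. rewrite /mono; ring. Qed.

Lemma sumnE' (f : nat -> R) n : sum_n f n = (\sum_(0 <= i < n.+1) f i)%R.
Proof.
elim: n => [|n IH]; first by rewrite sum_O big_nat1.
by rewrite sum_Sn IH (big_nat_recr n.+1).
Qed.

Lemma sumR_recr n (F : nat -> R) :
  (\sum_(0 <= i < n.+1) F i = \sum_(0 <= i < n) F i + F n)%R.
Proof. by rewrite big_nat_recr. Qed.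
Lemma sumR_recl n (F : nat -> R) :
  (\sum_(0 <= i < n.+1) F i = F 0%N + \sum_(0 <= i < n) F i.+1)%R.
Proof. by rewrite big_nat_recl. Qed.

Lemma S_widen c K x y : (forall j, c K j = 0) -> (forall i, c i K = 0) ->
  S c K.+1 x y = S c K x y.
Proof.
move=> h1 h2; rewrite /S sumR_recr.
rewrite [X in (_ + X)%R]big1 ?addr0 => [|j _]; last by rewrite h1 mono0.
apply: eq_bigr => i _; rewrite sumR_recr.
by rewrite h2 mono0 addr0.
Qed.

Lemma S_widen_le c n x y : (forall i j, (n < i + j)%N -> c i j = 0) ->
  forall k, S c (n.+1 + k) x y = S c n.+1 x y.
Proof.
move=> hc; elim=> [|k IH]; first by rewrite addn0.
rewrite addnS S_widen // => [j|i]; apply: hc; lia.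
Qed.

Lemma P2_ext n f g : (forall x y, f x y = g x y) -> P2 n f -> P2 n g.
Proof. by move=> e [c [hc hf]]; exists c; split=> // x y; rewrite -e. Qed.

Lemma P2_mono n m f : (n <= m)%N -> P2 n f -> P2 m f.
Proof.
move=> nm [c [hc hf]]; exists c; split=> [i j h|x y]; first by apply: hc; lia.
rewrite hf -(S_widen_le x y hc (m - n)).
by have -> : (n.+1 + (m - n) = m.+1)%N by lia.
Qed.

Lemma P2_const k : P2 0 (fun _ _ => k).
Proof.
exists (fun i j => if (i + j == 0)%N then k else 0); split.
  by move=> i j h; case: ifP => // /eqP; lia.
by move=> x y; rewrite /S !big_nat1 /mono /=; ring.
Qed.

Lemma S_add c d K x y : S (fun i j => c i j + d i j) K x y = S c K x y + S d K x y.
Proof.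
rewrite /S -big_split; apply: eq_bigr => i _; rewrite -big_split.
by apply: eq_bigr => j _; rring.
Qed.

Lemma S_scal k c K x y : S (fun i j => k * c i j) K x y = k * S c K x y.
Proof.
rewrite /S RmultE mulr_sumr; apply: eq_bigr => i _; rewrite mulr_sumr.
by apply: eq_bigr => j _; rring.
Qed.

Lemma P2_add n f g : P2 n f -> P2 n g -> P2 n (fun x y => f x y + g x y).
Proof.
move=> [c [hc hf]] [d [hd hg]]; exists (fun i j => c i j + d i j); split.
  by move=> i j h; rewrite hc // hd //; ring.
by move=> x y; rewrite S_add hf hg.
Qed.

Lemma P2_scal n k f : P2 n f -> P2 n (fun x y => k * f x y).
Proof.
move=> [c [hc hf]]; exists (fun i j => k * c i j); split.
  by move=> i j h; rewrite hc //; ring.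
by move=> x y; rewrite S_scal hf.
Qed.

Lemma P2_mulx n f : P2 n f -> P2 n.+1 (fun x y => x * f x y).
Proof.
move=> [c [hc hf]]; exists (fun i j => if i is i'.+1 then c i' j else 0); split.
  by move=> [|i] j h //; apply: hc; lia.
move=> x y; rewrite hf; symmetry; rewrite {1}/S sumR_recl.
rewrite [X in (X + _)%R]big1_seq ?add0r => [|j _]; last by rring.
rewrite RmultE /S mulr_sumr; apply: eq_bigr => i _; rewrite sumR_recr.
rewrite hc; last lia.
rewrite mono0 addr0 mulr_sumr; apply: eq_bigr => j _.
by rring.
Qed.

Lemma P2_muly n f : P2 n f -> P2 n.+1 (fun x y => y * f x y).
Proof.
move=> [c [hc hf]]; exists (fun i j => if j is j'.+1 then c i j' else 0); split.
  by move=> i [|j] h //; apply: hc; lia.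
move=> x y; rewrite hf; symmetry; rewrite {1}/S sumR_recr.
rewrite [X in (_ + X)%R]big1_seq ?addr0 => [|j _]; last first.
  case: j => [|j]; first by rewrite mono0.
  by rewrite hc ?mono0 //; lia.
rewrite RmultE /S mulr_sumr; apply: eq_bigr => i _; rewrite sumR_recl.
rewrite mono0 add0r mulr_sumr; apply: eq_bigr => j _.
by rring.
Qed.

Lemma P2_zero n : P2 n (fun _ _ => 0).
Proof. apply: P2_mono (P2_const 0); lia. Qed.

Lemma P2_constn n k : P2 n (fun _ _ => k).
Proof. apply: P2_mono (P2_const k); lia. Qed.

Lemma P2_sum n N (F : nat -> R -> R -> R) :
  (forall k, (k < N)%N -> P2 n (F k)) ->
  P2 n (fun x y => \sum_(0 <= k < N) F k x y)%R.
Proof.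
elim: N => [|N IH] hF.
  by apply: P2_ext (P2_zero n) => x y; rewrite big_geq.
have h1 : P2 n (fun x y => \sum_(0 <= k < N) F k x y)%R.
  by apply: IH => k kN; apply: hF; lia.
have h2 := hF N (ltnSn N).
by apply: P2_ext (P2_add h1 h2) => x y; rewrite sumR_recr.
Qed.

Lemma P2_mulxn n i f : P2 n f -> P2 (n + i) (fun x y => x ^ i * f x y).
Proof.
move=> h; elim: i => [|i IH].
  by rewrite addn0; apply: P2_ext h => x y /=; ring.
rewrite addnS; apply: P2_ext (P2_mulx IH) => x y /=; ring.
Qed.

Lemma P2_mulyn n j f : P2 n f -> P2 (n + j) (fun x y => y ^ j * f x y).
Proof.
move=> h; elim: j => [|j IH].
  by rewrite addn0; apply: P2_ext h => x y /=; ring.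
rewrite addnS; apply: P2_ext (P2_muly IH) => x y /=; ring.
Qed.

Lemma P2_mul a b f g : P2 a f -> P2 b g -> P2 (a + b) (fun x y => f x y * g x y).
Proof.
move=> [c [hc hf]] hg.
apply: (@P2_ext _ (fun x y => \sum_(0 <= i < a.+1) \sum_(0 <= j < a.+1)
           (mono (c i j) x y i j * g x y))%R).
  move=> x y; rewrite hf /S RmultE mulr_suml; apply: eq_bigr => i _.
  by rewrite mulr_suml.
apply: P2_sum => i hi; apply: P2_sum => j hj.
case: (ltnP a (i + j)) => hij.
  by rewrite hc //; apply: P2_ext (P2_zero _) => x y; rring.
apply: P2_ext (P2_mono _ (P2_scal (c i j) (P2_mulxn i (P2_mulyn j hg)))).
  by move=> x y; rring.
lia.
Qed.

Lemma P2_pow i p : P2 1 p -> P2 i (fun x y => p x y ^ i).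
Proof.
move=> hp; elim: i => [|i IH].
  by apply: P2_ext (P2_const 1) => x y.
by apply: P2_ext (P2_mul hp IH) => x y.
Qed.

Lemma P2_comp n u p q : P2 n u -> P2 1 p -> P2 1 q ->
  P2 n (fun x y => u (p x y) (q x y)).
Proof.
move=> [c [hc hu]] hp hq.
apply: (@P2_ext _ (fun x y => S c n.+1 (p x y) (q x y))) => [x y|]; first by rewrite hu.
apply: P2_sum => i hi; apply: P2_sum => j hj.
case: (ltnP n (i + j)) => hij.
  by rewrite hc //; apply: P2_ext (P2_zero _) => x y; rring.
apply: P2_ext (P2_mono _ (P2_scal (c i j) (P2_mul (P2_pow i hp) (P2_pow j hq)))).
  by move=> x y; rring.
lia.
Qed.

Lemma P2_x : P2 1 (fun x y => x).
Proof. by apply: P2_ext (P2_mulx (P2_const 1)) => x y; ring. Qed.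

Lemma P2_y : P2 1 (fun x y => y).
Proof. by apply: P2_ext (P2_muly (P2_const 1)) => x y; ring. Qed.

Lemma P2_lin a b k : P2 1 (fun x y => k + a * x + b * y).
Proof.
apply: P2_ext (P2_add (P2_add (P2_constn 1 k) (P2_scal a P2_x)) (P2_scal b P2_y)).
by [].
Qed.

Lemma is_poly2_P2 n u : is_poly2 n u <-> P2 n u.
Proof.
split.
  move=> [c hc]; exists (fun i j => if (i + j <=? n)%nat then c i j else 0); split.
    move=> i j h; case: (Nat.leb_spec0 (i + j) n) => // h'; lia.
  move=> x y; rewrite hc /S !sumnE'; apply: eq_bigr => i _; rewrite sumnE'.
  apply: eq_bigr => j _; case: (Nat.leb_spec0 (i + j) n) => _; rring.
move=> [c [hc hu]]; exists c => x y; rewrite hu /S !sumnE'; apply: eq_bigr => i _.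
rewrite sumnE'; apply: eq_bigr => j _; case: (Nat.leb_spec0 (i + j) n) => h.
  by rewrite /mono.
rewrite hc ?mono0 //; lia.
Qed.

Lemma is_poly1_P2 n v : is_poly1 n v -> P2 n (fun x _ => v x).
Proof.
move=> [c hc]; exists (fun i j => if (j == 0)%N && (i <= n)%N then c i else 0); split.
  move=> i j h; case: ifP => // /andP [/eqP hj hi]; lia.
move=> x y; rewrite hc /S sumnE'; apply: eq_big_nat => i /andP [_ hi].
rewrite sumR_recl big1_seq ?addr0; last first.
  by move=> j _ /=; rewrite mono0.
rewrite /= (_ : (i <= n)%N = true); last by lia.
rring.
Qed.

Lemma is_poly1_lin n v w a b : is_poly1 n v -> is_poly1 n w ->
  is_poly1 n (fun t => a * v t + b * w t).
Proof.
move=> [c hc] [d hd]; exists (fun k => a * c k + b * d k) => t.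
rewrite hc hd !sumnE' RmultE mulr_sumr RmultE mulr_sumr RplusE -big_split.
by apply: eq_bigr => k _; rring.
Qed.

Definition pt (k : nat) : R := / (INR k + 3).

Lemma pt_pos k : 0 < pt k /\ pt k <= / 3.
Proof.
have h := pos_INR k; rewrite /pt; split; first by apply: Rinv_0_lt_compat; lra.
apply: Rinv_le_contravar; lra.
Qed.

Lemma pt_inj : injective pt.
Proof.
move=> a b; rewrite /pt => h.
have ha := pos_INR a; have hb := pos_INR b.
have : INR a + 3 = INR b + 3 by apply: Rinv_eq_reg.
by move=> e; apply: INR_eq; lra.
Qed.

Lemma roots_zero K (d : nat -> R) :
  (forall k, (k < K)%N -> (\sum_(0 <= i < K) d i * pow (pt k) i)%R = 0) ->
  forall i, (i < K)%N -> d i = 0.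
Proof.
move=> h i hi.
have p0 : ((\poly_(i < K) d i)%R : {poly R}) = 0%R.
  apply: (@roots_geq_poly_eq0 _ _ [seq pt k | k <- iota 0 K]).
  - apply/allP => r /mapP [k hk ->]; rewrite /root horner_poly; apply/eqP.
    rewrite mem_iota in hk; apply: etrans (h k _); last by lia.
    by rewrite big_mkord; apply: eq_bigr => j _; rewrite -?RpowE ?RpowE.
  - by rewrite map_inj_uniq ?iota_uniq //; apply: pt_inj.
  - by rewrite size_map size_iota size_poly.
by have := congr1 (fun q : {poly R} => (q`_i)%R) p0; rewrite coef_poly hi coef0.
Qed.

Lemma S_swap c K x y :
  S c K x y = (\sum_(0 <= j < K) (\sum_(0 <= i < K) c i j * pow x i) * pow y j)%R.
Proof.
rewrite /S exchange_big_nat; apply: eq_bigr => j _.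
by rewrite mulr_suml; apply: eq_bigr => i _; rring.
Qed.

Lemma S_zero_coef c K :
  (forall a b, (a < K)%N -> (b < K)%N -> S c K (pt a) (pt b) = 0) ->
  forall i j, (i < K)%N -> (j < K)%N -> c i j = 0.
Proof.
move=> h i j hi hj.
have h1 : forall a, (a < K)%N -> forall j, (j < K)%N ->
    (\sum_(0 <= i < K) c i j * pow (pt a) i)%R = 0.
  move=> a ha; apply: roots_zero => b hb.
  by rewrite -S_swap; apply: h.
apply: (roots_zero (d := fun i => c i j)) hi => a ha.
by apply: h1.
Qed.

Lemma P2_zero_box n f : P2 n f ->
  (forall x y, 0 < x <= / 3 -> 0 < y <= / 3 -> f x y = 0) -> forall x y, f x y = 0.
Proof.
move=> [c [hc hf]] h x y.
have hz : forall i j, (i < n.+1)%N -> (j < n.+1)%N -> c i j = 0.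
  apply: S_zero_coef => a b _ _; rewrite -hf; apply: h; apply: pt_pos.
rewrite hf /S big1_seq // => i; rewrite mem_index_iota => /andP [_ hi].
by rewrite big1_seq // => j; rewrite mem_index_iota => /andP [_ hj]; rewrite hz ?mono0.
Qed.

Lemma S_y0 c K x : S c K.+1 x 0 = (\sum_(0 <= i < K.+1) c i 0%N * pow x i)%R.
Proof.
rewrite /S; apply: eq_bigr => i _; rewrite sumR_recl big1_seq ?addr0.
  by rring.
by move=> j _; rring.
Qed.

Lemma P2_1d_zero n h : P2 n (fun x _ => h x) ->
  (forall a, (a <= n)%N -> h (pt a) = 0) -> forall x, h x = 0.
Proof.
move=> [c [hc hf]] h0 x.
have hz : forall i, (i < n.+1)%N -> c i 0%N = 0.
  apply: roots_zero => a ha; rewrite -S_y0 -hf; apply: h0; lia.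
rewrite (hf x 0) S_y0 big1_seq // => i; rewrite mem_index_iota => /andP [_ hi].
by rewrite hz // mul0r.
Qed.

Lemma cont_sum N (F : nat -> R -> R) x : (forall k, continuous (F k) x) ->
  continuous (fun t => (\sum_(0 <= k < N) F k t)%R) x.
Proof.
move=> hF; elim: N => [|N IH].
  by apply: continuous_ext (continuous_const 0 x) => t; rewrite big_geq.
apply: continuous_ext (continuous_plus _ _ _ IH (hF N)) => t.
by rewrite sumR_recr.
Qed.

Lemma P2_cont n f : P2 n f -> forall y x, continuous (fun x => f x y) x.
Proof.
move=> [c [hc hf]] y x.
apply: continuous_ext (_ : continuous (fun t => S c n.+1 t y) x) => [t|].
  by rewrite hf.
apply: cont_sum => i; apply: cont_sum => j; apply: ex_derive_continuous.
rewrite /mono; auto_derive; done.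
Qed.

Lemma P2_swap n f : P2 n f -> P2 n (fun x y => f y x).
Proof. by move=> h; apply: (P2_comp h P2_y P2_x). Qed.

Lemma P2_cont_y n f : P2 n f -> forall x y, continuous (fun y => f x y) y.
Proof. by move=> h x y; apply: (P2_cont (P2_swap h)). Qed.

Lemma is_RInt_sum N (F : nat -> R -> R) (I : nat -> R) a b :
  (forall k, is_RInt (F k) a b (I k)) ->
  is_RInt (fun t => (\sum_(0 <= k < N) F k t)%R) a b (\sum_(0 <= k < N) I k)%R.
Proof.
move=> hF; elim: N => [|N IH].
  have := is_RInt_const a b 0; rewrite scal_zero_r big_geq // => h.
  by apply: is_RInt_ext h => t _; rewrite big_geq.
rewrite sumR_recr; apply: is_RInt_ext (is_RInt_plus _ _ _ _ _ _ IH (hF N)) => t _.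
by rewrite sumR_recr.
Qed.

Lemma P2_omx : P2 1 (fun x y : R => 1 - x).
Proof. by apply: P2_ext (P2_lin (-1) 0 1) => x y; ring. Qed.

Definition Tm (c : nat -> nat -> R) i j x :=
  c i j * pow x i * (pow (1 - x) j.+1 / INR j.+1 - pow 0 j.+1 / INR j.+1).

Lemma P2_inner n f : P2 n f -> exists G, P2 n.+1 (fun x _ => G x) /\
  forall x, is_RInt (f x) 0 (1 - x) (G x).
Proof.
move=> [c [hc hf]].
exists (fun x => \sum_(0 <= i < n.+1) \sum_(0 <= j < n.+1) Tm c i j x)%R; split.
  apply: P2_sum => i hi; apply: P2_sum => j hj.
  case: (ltnP n (i + j)) => hij.
    by apply: P2_ext (P2_zero _) => x y; rewrite /Tm hc //; ring.
  have h := P2_scal (c i j / INR j.+1) (P2_mul (P2_pow i P2_x) (P2_pow j.+1 P2_omx)).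
  apply: P2_ext (P2_mono _ h) => [x y|]; last by lia.
  have hj0 : INR j.+1 <> 0 by apply: not_0_INR.
  rewrite /Tm /=; field; exact hj0.
move=> x.
have hm : forall i j, is_RInt (fun t => mono (c i j) x t i j) 0 (1 - x) (Tm c i j x).
  move=> i j.
  have h := is_RInt_scal (fun t => pow t j) 0 (1 - x) (c i j * pow x i) _ (is_RInt_pow 0 (1 - x) j).
  apply: is_RInt_ext h => t _; rewrite /mono /scal /= /mult /=; ring.
apply: is_RInt_ext (is_RInt_sum (fun i => is_RInt_sum (hm i))) => t _.
by rewrite hf.
Qed.

Lemma int_T_ext f g : (forall x y, f x y = g x y) -> int_T f = int_T g.
Proof.
move=> e; have -> // : f = g.
by apply: functional_extensionality => x; apply: functional_extensionality => y.
Qed.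

Lemma P2_int n f : P2 n f -> exists G, P2 n.+1 (fun x _ => G x) /\
  (forall x, is_RInt (f x) 0 (1 - x) (G x)) /\ int_T f = RInt G 0 1 /\ ex_RInt G 0 1.
Proof.
move=> hf; have [G [hG hi]] := P2_inner hf.
exists G; split; [done|split; [done|split]].
  by rewrite /int_T; apply: RInt_ext => x _; apply: is_RInt_unique.
apply: ex_RInt_continuous => z _; exact: (P2_cont hG (y:=0) (x:=z)).
Qed.

Lemma int_T_lin n m f g a b : P2 n f -> P2 m g ->
  int_T (fun x y => a * f x y + b * g x y) = a * int_T f + b * int_T g.
Proof.
move=> hf hg.
have [F [hF [hFi [hFe hFx]]]] := P2_int hf.
have [G [hG [hGi [hGe hGx]]]] := P2_int hg.
rewrite hFe hGe /int_T.
have h1 : forall x, RInt (fun y => a * f x y + b * g x y) 0 (1 - x) = a * F x + b * G x.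
  move=> x; apply: is_RInt_unique.
  exact: (is_RInt_plus _ _ _ _ _ _ (is_RInt_scal _ _ _ a _ (hFi x)) (is_RInt_scal _ _ _ b _ (hGi x))).
rewrite (RInt_ext _ (fun x => a * F x + b * G x)) => [|x _]; last by apply: h1.
apply: is_RInt_unique.
exact: (is_RInt_plus _ _ _ _ _ _ (is_RInt_scal _ _ _ a _ (RInt_correct _ _ _ hFx))
                                (is_RInt_scal _ _ _ b _ (RInt_correct _ _ _ hGx))).
Qed.

Lemma int_T_sum n N (F : nat -> R -> R -> R) :
  (forall k, (k < N)%N -> P2 n (F k)) ->
  int_T (fun x y => \sum_(0 <= k < N) F k x y)%R = (\sum_(0 <= k < N) int_T (F k))%R.
Proof.
elim: N => [|N IH] hF.
  rewrite big_geq // (int_T_ext (g := fun x y => 0 * 0 + 0 * 0)) => [|x y]; last first.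
    by rewrite big_geq // Rmult_0_l Rplus_0_l.
  by rewrite (int_T_lin 0 0 (P2_zero 0) (P2_zero 0)) !Rmult_0_l Rplus_0_l.
have hs : P2 n (fun x y => \sum_(0 <= k < N) F k x y)%R.
  by apply: P2_sum => k hk; apply: hF; lia.
rewrite (int_T_ext (g := fun x y => 1 * (\sum_(0 <= k < N) F k x y)%R + 1 * F N x y)).
  rewrite (int_T_lin 1 1 hs (hF N (ltnSn N))) IH; last by move=> k hk; apply: hF; lia.
  by rewrite sumR_recr !Rmult_1_l.
by move=> x y; rewrite sumR_recr !Rmult_1_l.
Qed.

Lemma RInt_pos_pt (g : R -> R) a b x0 : a < x0 < b ->
  (forall x, a <= x <= b -> continuous g x) ->
  (forall x, a < x < b -> 0 <= g x) -> 0 < g x0 -> 0 < RInt g a b.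
Proof.
move=> hx hc hpos hg0.
have hx0 : continuous g x0 by apply: hc; lra.
have eps : 0 < g x0 / 2 by lra.
have [d hd] := hx0 _ (locally_ball (g x0) (mkposreal _ eps)).
have hd' : forall y, Rabs (y - x0) < d -> 0 < g y.
  move=> y hy; have := hd y hy.
  rewrite /ball /= /AbsRing_ball /abs /minus /plus /opp /= => h.
  change (Hierarchy.opp (g x0)) with (- g x0) in h.
  have := Rabs_def2 _ _ h; lra.
have dpos := cond_pos d.
set c1 := Rmax a (x0 - d / 2); set d1 := Rmin b (x0 + d / 2).
have hc1 : a <= c1 /\ c1 < x0 /\ x0 - d / 2 <= c1.
  rewrite /c1; split; [apply: Rmax_l | split; [apply: Rmax_lub_lt; lra | apply: Rmax_r]].
have hd1 : d1 <= b /\ x0 < d1 /\ d1 <= x0 + d / 2.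
  rewrite /d1; split; [apply: Rmin_l | split; [apply: Rmin_glb_lt; lra | apply: Rmin_r]].
have ex : forall u v, a <= u -> u <= v -> v <= b -> ex_RInt g u v.
  move=> u v h1 h2 h3; apply: ex_RInt_continuous => z hz; apply: hc.
  rewrite Rmin_left in hz; last lra. rewrite Rmax_right in hz; last lra. lra.
have e1 : RInt g a b = RInt g a c1 + (RInt g c1 d1 + RInt g d1 b).
  rewrite -[RInt g a b](RInt_Chasles g a c1 b); first last.
  - apply: ex; lra.
  - apply: ex; lra.
  rewrite -[RInt g c1 b](RInt_Chasles g c1 d1 b) //; apply: ex; lra.
have i1 : 0 <= RInt g a c1.
  apply: RInt_ge_0; [lra | apply: ex; lra | move=> x hx'; apply: hpos; lra].
have i3 : 0 <= RInt g d1 b.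
  apply: RInt_ge_0; [lra | apply: ex; lra | move=> x hx'; apply: hpos; lra].
have i2 : 0 < RInt g c1 d1.
  apply: RInt_gt_0; first lra.
    move=> x hx'; apply: hd'; apply: Rabs_def1; lra.
  move=> x hx'; apply: hc; lra.
lra.
Qed.

Lemma int_T_pos n g : P2 n g ->
  (forall x y, 0 < x -> 0 < y -> x + y < 1 -> 0 <= g x y) -> int_T g = 0 ->
  forall x y, 0 < x -> 0 < y -> x + y < 1 -> g x y = 0.
Proof.
move=> hg hpos h0 x0 y0 hx hy hxy.
have [G [hG [hGi [hGe hGx]]]] := P2_int hg.
have hGv : forall x, G x = RInt (g x) 0 (1 - x).
  by move=> x; symmetry; apply: is_RInt_unique.
case: (Rle_lt_or_eq_dec 0 (g x0 y0)); [by apply: hpos| |by []].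
move=> hgt; exfalso.
have : 0 < RInt G 0 1.
  apply: (RInt_pos_pt (x0 := x0)); first lra.
  - by move=> x _; exact: (P2_cont hG (y:=0) (x:=x)).
  - move=> x hx'; rewrite hGv; apply: RInt_ge_0; first lra.
      by exists (G x).
    by move=> y hy'; apply: hpos; lra.
  - rewrite hGv; apply: (RInt_pos_pt (x0 := y0)); first lra.
    + by move=> y _; exact: (P2_cont_y hg (x:=x0) (y:=y)).
    + by move=> y hy'; apply: hpos; lra.
    + done.
rewrite -hGe h0; lra.
Qed.

Lemma fact_I m u : P2 m.+1 u -> (forall t, 0 <= t <= 1 -> u t 0 = 0) ->
  exists w, P2 m w /\ forall x y, u x y = y * w x y.
Proof.
move=> [c [hc hu]] h0.
have hz : forall i, (i < m.+2)%N -> c i 0%N = 0.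
  apply: roots_zero => k hk; rewrite -S_y0 -hu; apply: h0.
  have := pt_pos k; lra.
exists (S (fun i j => c i j.+1) m.+1); split.
  exists (fun i j => c i j.+1); split=> // i j h; apply: hc; lia.
move=> x y; rewrite hu /S sumR_recr.
rewrite [X in (_ + X)%R]big1_seq ?addr0 => [|j]; last first.
  rewrite mem_index_iota => /andP [_ hj]; case: j hj => [|j] hj.
    by rewrite hz ?mono0.
  by rewrite hc ?mono0 //; lia.
rewrite RmultE mulr_sumr; apply: eq_big_nat => i /andP [_ hi].
rewrite sumR_recl hz; last by lia.
rewrite mono0 add0r mulr_sumr; apply: eq_bigr => j _; rring.
Qed.

Lemma fact_II m u : P2 m.+1 u -> (forall t, 0 <= t <= 1 -> u 0 t = 0) ->
  exists w, P2 m w /\ forall x y, u x y = x * w x y.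
Proof.
move=> hu h0.
have [w [hw e]] := fact_I (P2_swap hu) h0.
exists (fun x y => w y x); split; first by apply: P2_swap.
by move=> x y; rewrite -e.
Qed.

Lemma fact_III m u : P2 m.+1 u -> (forall t, 0 <= t <= 1 -> u (1 - t) t = 0) ->
  exists w, P2 m w /\ forall x y, u x y = (1 - x - y) * w x y.
Proof.
move=> hu h0.
have hl : P2 1 (fun x y => 1 - x - y) by apply: P2_ext (P2_lin (-1) (-1) 1) => x y; ring.
have hu' : P2 m.+1 (fun x y => u (1 - x - y) y) by apply: P2_comp hu hl P2_y.
have h0' : forall t, 0 <= t <= 1 -> u (1 - 0 - t) t = 0.
  by move=> t ht; rewrite (_ : 1 - 0 - t = 1 - t) ?h0 //; ring.
have [w [hw e]] := fact_II hu' h0'.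
exists (fun x y => w (1 - x - y) y); split; first by apply: P2_comp hw hl P2_y.
by move=> x y; rewrite -e; congr (u _ _); ring.
Qed.

Lemma P2_0_const u : P2 0 u -> forall x y, u x y = u 0 0.
Proof.
move=> [c [hc hu]] x y; rewrite !hu /S !big_nat1 /mono /=; ring.
Qed.

Lemma inj_core n Z u : Pperp n u -> (forall t, 0 <= t <= 1 -> gamma Z u t = 0) ->
  forall x y, u x y = 0.
Proof.
case: n => [|m] [hu2 hort] h0; move/is_poly2_P2: hu2 => hu2.
  move=> x y; rewrite (P2_0_const hu2 x y).
  case: Z h0 => /= h0; have := h0 0 ltac:(lra); by rewrite ?(P2_0_const hu2 (1 - 0) 0).
have [l [w [hl [hlp [hw e]]]]] : exists l w, P2 1 l /\
    (forall x y, 0 < x -> 0 < y -> x + y < 1 -> 0 < l x y) /\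
    P2 m w /\ forall x y, u x y = l x y * w x y.
  case: Z h0 => /= h0.
  - have [w [hw e]] := fact_I hu2 h0.
    by exists (fun x y => y), w; split; [exact: P2_y | split => //; move=> x y; lra].
  - have [w [hw e]] := fact_II hu2 h0.
    by exists (fun x y => x), w; split; [exact: P2_x | split => //; move=> x y; lra].
  - have [w [hw e]] := fact_III hu2 h0.
    exists (fun x y => 1 - x - y), w; split; last by split => //; move=> x y; lra.
    by apply: P2_ext (P2_lin (-1) (-1) 1) => x y; ring.
have hint : int_T (fun x y => l x y * w x y * w x y) = 0.
  rewrite -(hort w); last by apply/is_poly2_P2.
  by apply: int_T_ext => x y; rewrite e.
have hg : P2 (1 + m + m) (fun x y => l x y * w x y * w x y) by apply: P2_mul (P2_mul hl hw) hw.
have hnn : forall x y, 0 < x -> 0 < y -> x + y < 1 -> 0 <= l x y * w x y * w x y.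
  move=> x y hx hy hxy; have hp := hlp x y hx hy hxy.
  rewrite Rmult_assoc; apply: Rmult_le_pos; [lra | apply: Rle_0_sqr].
have hg0 := int_T_pos hg hnn hint.
have hwz : forall x y, 0 < x <= / 3 -> 0 < y <= / 3 -> w x y = 0.
  move=> x y hx hy.
  have hxy : x + y < 1 by lra.
  have := hg0 x y ltac:(lra) ltac:(lra) hxy.
  have := hlp x y ltac:(lra) ltac:(lra) hxy.
  move=> hpos hz.
  case: (Rmult_integral _ _ hz) => [h1|]; last by [].
  by case: (Rmult_integral _ _ h1) => [h2|//]; lra.
move=> x y; rewrite e (P2_zero_box hw hwz); ring.
Qed.

Section LinAlg.
Local Open Scope ring_scope.
Variables (m : nat) (f : 'M[R]_(m, m) -> 'M[R]_(m, m)).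
Hypothesis lf : linear f.
HB.instance Definition _ := GRing.isLinear.Build R 'M[R]_(m, m) 'M[R]_(m, m) _ f lf.

Lemma inj_surj : (forall c, f c = 0 -> c = 0) -> forall T, exists c, f c = T.
Proof.
move=> inj T.
have hfree : row_free (lin_mx f).
  apply: inj_row_free => v hv.
  have h : f (vec_mx v) = 0.
    apply/eqP; rewrite -mxvec_eq0 -mul_vec_lin vec_mxK hv //.
  by rewrite -[v]vec_mxK (inj _ h) linear0.
have : row_full (lin_mx f) by rewrite row_full_unit -row_free_unit.
case/row_fullP => B hB.
exists (vec_mx (mxvec T *m B)).
apply: (can_inj mxvecK); rewrite -mul_vec_lin vec_mxK -mulmxA hB mulmx1 //.
Qed.
End LinAlg.

Lemma S_ext c d K x y : (forall i j, c i j = d i j) -> S c K x y = S d K x y.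
Proof. by move=> e; rewrite /S; apply: eq_bigr => i _; apply: eq_bigr => j _; rewrite e. Qed.

Definition cf n (c : 'M[R]_(n.+1, n.+1)) (i j : nat) : R :=
  if (i + j <= n)%N then c (inord i) (inord j) else 0.
Definition uc n (c : 'M[R]_(n.+1, n.+1)) := S (cf c) n.+1.

Lemma P2_uc n (c : 'M[R]_(n.+1, n.+1)) : P2 n (uc c).
Proof.
exists (cf c); split=> // i j h; rewrite /cf; case: ifP => // h'; lia.
Qed.

Lemma uc_lin n k (c d : 'M[R]_(n.+1, n.+1)) x y :
  uc (k *: c + d)%R x y = k * uc c x y + uc d x y.
Proof.
rewrite /uc -S_scal -S_add; apply: S_ext => i j; rewrite /cf.
case: ifP => _; last by ring.
by rewrite !mxE.
Qed.

Lemma gamma_lin Z u1 u2 a b t :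
  gamma Z (fun x y => a * u1 x y + b * u2 x y) t = a * gamma Z u1 t + b * gamma Z u2 t.
Proof. by case: Z. Qed.

Lemma P2_gamma n Z u : P2 n u -> P2 n (fun x _ => gamma Z u x).
Proof.
move=> hu; case: Z => /=.
- exact: (P2_comp hu P2_x (P2_constn 1 0)).
- exact: (P2_comp hu (P2_constn 1 0) P2_x).
- exact: (P2_comp hu P2_omx P2_x).
Qed.

Lemma P2_mon a b : P2 (a + b) (fun x y => pow x a * pow y b).
Proof. exact: (P2_mul (P2_pow a P2_x) (P2_pow b P2_y)). Qed.

Lemma orth_from_mon n m u : P2 n u ->
  (forall a b, (a + b <= m)%N -> int_T (fun x y => u x y * (pow x a * pow y b)) = 0) ->
  forall w, P2 m w -> int_T (fun x y => u x y * w x y) = 0.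
Proof.
move=> hu h w [d [hd hw]].
have hP : forall a b, P2 (n + (m + m)) (fun x y => d a b * (u x y * (pow x a * pow y b))).
  move=> a b; case: (ltnP m (a + b)) => hab.
    by rewrite hd //; apply: P2_ext (P2_zero _) => x y; ring.
  apply: P2_scal; apply: P2_mono (P2_mul hu (P2_mon a b)); lia.
rewrite (int_T_ext (g := fun x y => \sum_(0 <= a < m.+1) \sum_(0 <= b < m.+1)
            (d a b * (u x y * (pow x a * pow y b))))%R); last first.
  move=> x y; rewrite hw /S RmultE mulr_sumr; apply: eq_bigr => a _.
  by rewrite mulr_sumr; apply: eq_bigr => b _; rring.
rewrite (int_T_sum (n := n + (m + m))) => [|a _]; last by apply: P2_sum => b _; apply: hP.
rewrite big1_seq // => a; rewrite mem_index_iota => /andP [_ ha].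
rewrite (int_T_sum (n := n + (m + m))) => [|b _]; last by apply: hP.
rewrite big1_seq // => b; rewrite mem_index_iota => /andP [_ hb].
rewrite (int_T_ext (g := fun x y => d a b * (u x y * (pow x a * pow y b)) + 0 * 0)); last first.
  by move=> x y; rring.
rewrite (int_T_lin _ 0 (P2_mul hu (P2_mon a b)) (P2_zero 0)).
case: (ltnP m (a + b)) => hab; first by rewrite hd // !Rmult_0_l Rplus_0_l.
by rewrite h // Rmult_0_r Rmult_0_l Rplus_0_l.
Qed.

Definition Lent n Z (c : 'M[R]_(n.+1, n.+1)) (a b : nat) : R :=
  if (a + b < n)%N then int_T (fun x y => uc c x y * (pow x a * pow y b))
  else if (a + b == n)%N then gamma Z (uc c) (pt a)
  else c (inord a) (inord b).

Definition Lmap n Z (c : 'M[R]_(n.+1, n.+1)) : 'M[R]_(n.+1, n.+1) :=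
  \matrix_(a, b) Lent Z c a b.

Lemma Lmap_lin n Z : linear (@Lmap n Z).
Proof.
move=> k c d; apply/matrixP => a b; rewrite !mxE /Lent.
case: ifP => _.
  rewrite (int_T_ext (g := fun x y => k * (uc c x y * (pow x a * pow y b)) +
                                   1 * (uc d x y * (pow x a * pow y b)))).
    rewrite (int_T_lin _ _ (P2_mul (P2_uc c) (P2_mon a b)) (P2_mul (P2_uc d) (P2_mon a b))).
    by rewrite Rmult_1_l.
  by move=> x y; rewrite uc_lin; ring.
case: ifP => _.
  rewrite (_ : uc (k *: c + d)%R = fun x y => k * uc c x y + 1 * uc d x y).
    by rewrite gamma_lin Rmult_1_l.
  apply: functional_extensionality => x; apply: functional_extensionality => y.
  by rewrite uc_lin Rmult_1_l.
by rewrite !mxE.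
Qed.

Lemma gamma_pts n Z u v : P2 n u -> is_poly1 n v ->
  (forall a, (a <= n)%N -> gamma Z u (pt a) = v (pt a)) -> forall t, gamma Z u t = v t.
Proof.
move=> hu hv h t.
have hP := P2_add (P2_gamma Z hu) (P2_scal (-1) (is_poly1_P2 hv)).
have h0 : forall a, (a <= n)%N -> gamma Z u (pt a) + -1 * v (pt a) = 0.
  by move=> a ha; rewrite h //; ring.
have := P2_1d_zero hP h0 t; lra.
Qed.

Lemma Pperp_intro n u : P2 n u ->
  (forall m, n = m.+1 -> forall w, P2 m w -> int_T (fun x y => u x y * w x y) = 0) ->
  Pperp n u.
Proof.
move=> hu h; split; first by apply/is_poly2_P2.
case: n hu h => // m hu h w hw; apply: (h m) => //; exact/is_poly2_P2.
Qed.

Lemma Lmap_inj n Z (c : 'M[R]_(n.+1, n.+1)) : Lmap Z c = 0%R -> c = 0%R.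
Proof.
move/matrixP => H.
have he : forall a b : 'I_n.+1, Lent Z c a b = 0.
  by move=> a b; have := H a b; rewrite !mxE.
have hpp : Pperp n (uc c).
  apply: Pperp_intro (P2_uc c) _ => m hm; apply: (orth_from_mon (P2_uc c)) => a b hab.
  have := he (inord a) (inord b); rewrite /Lent !inordK; try lia.
  by rewrite (_ : (a + b < n)%N = true) //; lia.
have hg : forall t, 0 <= t <= 1 -> gamma Z (uc c) t = 0.
  move=> t _; apply: P2_1d_zero (P2_gamma Z (P2_uc c)) _ t => a ha.
  have := he (inord a) (inord (n - a)); rewrite /Lent !inordK; try lia.
  rewrite (_ : (a + (n - a) < n)%N = false); last lia.
  by rewrite (_ : (a + (n - a) == n)%N = true) //; lia.
have hz := inj_core hpp hg.
have hcf : forall i j, (i < n.+1)%N -> (j < n.+1)%N -> cf c i j = 0.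
  by apply: S_zero_coef => a b _ _; apply: hz.
apply/matrixP => a b; rewrite mxE.
case: (leqP (a + b) n) => hab.
  by have := hcf a b (ltn_ord a) (ltn_ord b); rewrite /cf hab !inord_val.
have := he a b; rewrite /Lent.
rewrite (_ : (a + b < n)%N = false); last lia.
by rewrite (_ : (a + b == n)%N = false) ?inord_val //; lia.
Qed.

Lemma exists_ext n Z v : is_poly1 n v -> exists u, Pperp n u /\ forall t, gamma Z u t = v t.
Proof.
move=> hv.
pose Tv : 'M[R]_(n.+1, n.+1) := (\matrix_(a, b) (if (a + b == n)%N then v (pt a) else 0))%R.
have [c hc] := inj_surj (@Lmap_lin n Z) (@Lmap_inj n Z) Tv.
have he : forall a b : 'I_n.+1, Lent Z c a b = if (a + b == n)%N then v (pt a) else 0.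
  by move=> a b; have := congr1 (fun M : 'M[R]_(n.+1, n.+1) => M a b) hc; rewrite !mxE.
exists (uc c); split.
  apply: Pperp_intro (P2_uc c) _ => m hm; apply: (orth_from_mon (P2_uc c)) => a b hab.
  have := he (inord a) (inord b); rewrite /Lent !inordK; try lia.
  rewrite (_ : (a + b < n)%N = true); last lia.
  by rewrite (_ : (a + b == n)%N = false) //; lia.
apply: gamma_pts (P2_uc c) hv _ => a ha.
have := he (inord a) (inord (n - a)); rewrite /Lent !inordK; try lia.
rewrite (_ : (a + (n - a) < n)%N = false); last lia.
by rewrite (_ : (a + (n - a) == n)%N = true) //; lia.
Qed.

Lemma Pperp_lin n u1 u2 a b : Pperp n u1 -> Pperp n u2 ->
  Pperp n (fun x y => a * u1 x y + b * u2 x y).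
Proof.
move=> [h1 o1] [h2 o2].
move/is_poly2_P2: h1 => h1; move/is_poly2_P2: h2 => h2.
apply: Pperp_intro; first by apply: P2_add; apply: P2_scal.
move=> m hm w hw; subst n.
rewrite (int_T_ext (g := fun x y => a * (u1 x y * w x y) + b * (u2 x y * w x y))); last first.
  by move=> x y; ring.
rewrite (int_T_lin _ _ (P2_mul h1 hw) (P2_mul h2 hw)).
rewrite o1 ?o2; try exact/is_poly2_P2; ring.
Qed.

Lemma uniq_ext n Z u1 u2 : Pperp n u1 -> Pperp n u2 ->
  (forall t, 0 <= t <= 1 -> gamma Z u1 t = gamma Z u2 t) -> u1 = u2.
Proof.
move=> h1 h2 hg.
have hd := Pperp_lin 1 (-1) h1 h2.
have hg0 : forall t, 0 <= t <= 1 -> gamma Z (fun x y => 1 * u1 x y + -1 * u2 x y) t = 0.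
  by move=> t ht; rewrite gamma_lin hg //; ring.
have hz := inj_core hd hg0.
apply: functional_extensionality => x; apply: functional_extensionality => y.
have := hz x y; lra.
Qed.

Theorem lemma13 (n : nat) (Z : edge) :
  (forall v : R -> R, is_poly1 n v ->
     exists! u : R -> R -> R,
       Pperp n u /\ (forall t, 0 <= t <= 1 -> v t = gamma Z u t)) /\
  (exists E : (R -> R) -> (R -> R -> R),
     (forall v, is_poly1 n v ->
        Pperp n (E v) /\ (forall t, 0 <= t <= 1 -> v t = gamma Z (E v) t)) /\
     (forall v w a b, is_poly1 n v -> is_poly1 n w ->
        E (fun t => a * v t + b * w t) = (fun x y => a * E v x y + b * E w x y))).
Proof.
have ex : forall v, is_poly1 n v ->
    exists u, Pperp n u /\ (forall t, 0 <= t <= 1 -> v t = gamma Z u t).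
  move=> v hv; have [u [hu hg]] := exists_ext Z hv.
  by exists u; split => // t _; rewrite hg.
split.
  move=> v hv; have [u [hu hg]] := ex v hv.
  exists u; split; first by split.
  move=> u' [hu' hg']; apply: (uniq_ext (Z := Z) hu hu') => t ht.
  by rewrite -hg // -hg'.
pose E := fun v => ClassicalEpsilon.epsilon (inhabits (fun _ _ : R => 0))
  (fun u => Pperp n u /\ (forall t, 0 <= t <= 1 -> v t = gamma Z u t)).
have hE : forall v, is_poly1 n v ->
    Pperp n (E v) /\ (forall t, 0 <= t <= 1 -> v t = gamma Z (E v) t).
  by move=> v hv; exact: (ClassicalEpsilon.epsilon_spec _ _ (ex v hv)).
exists E; split => // v w a b hv hw.
have [h1 g1] := hE v hv; have [h2 g2] := hE w hw.
have [h3 g3] := hE _ (is_poly1_lin a b hv hw).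
apply: (uniq_ext (Z := Z) h3 (Pperp_lin a b h1 h2)) => t ht.
by rewrite gamma_lin -g3 // -g1 // -g2.
Qed.
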